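(* Let $C_m=\frac{1}{m+1}\binom{2m}{m}$ denote the $m$-th Catalan number and, for $i\ge1$, let $\alpha_i=C_{i-1}+\delta_{i,1}$, where $\delta_{i,1}$ is $1$ if $i=1$ and $0$ otherwise. Then for every integer $d\ge1$, $$\binom{2d}{d}=\sum_{\mathcal P}\alpha_{a_1}\alpha_{a_2}\cdots\alpha_{a_k},$$ where the sum is over all cyclic compositions $\mathcal P$ of $d$ (into any number $k\ge1$ of parts) and $a_1,\dots,a_k$ are the sizes of the parts of $\mathcal P$.
   Context: For $d\ge1$ let $C_d$ (the cycle graph) have vertex set $\mathbb Z_d$ and the $d$ edges $\{i,i+1\}$, $i\in\mathbb Z_d$ (a loop if $d=1$, two parallel edges if $d=2$). A cyclic composition of $d$ into $k$ parts ($1\le k\le d$) is a choice of a $k$-element subset of the $d$ edges of the cycle to delete; its parts are the $k$ connected components (each a path) of the remaining graph, and the size of a part is its number of vertices. There are $\binom dk$ cyclic compositions of $d$ into $k$ parts, hence $2^d-1$ cyclic compositions of $d$ in total. *)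

(* Defs.v *)
From mathcomp Require Import all_boot.
Set Implicit Arguments. Unset Strict Implicit. Unset Printing Implicit Defensive.

Definition catalan (m : nat) : nat := 'C(2 * m, m) %/ m.+1.

Definition alpha (i : nat) : nat := catalan i.-1 + (i == 1).

(* The cycle graph C_d: vertices 'I_d (= Z_d), edge number i : 'I_d joins
   i and i+1 mod d (ordS i).  Given the set S of deleted edges, two vertices
   are adjacent in the remaining graph iff some non-deleted edge joins them. *)
Definition cyc_adj (d : nat) (S : {set 'I_d}) : rel 'I_d :=
  fun x y => ((x \notin S) && (y == ordS x)) || ((y \notin S) && (x == ordS y)).

Definition cyc_parts (d : nat) (S : {set 'I_d}) : {set {set 'I_d}} :=
  equivalence_partition (connect (cyc_adj S)) [set: 'I_d].

(* Main.v *)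
Require Import Defs.
From mathcomp Require Import all_boot zify.
Set Implicit Arguments. Unset Strict Implicit. Unset Printing Implicit Defensive.

Lemma cyc_adj_sym d (S : {set 'I_d}) : symmetric (cyc_adj S).
Proof. by move=> x y; rewrite /cyc_adj orbC. Qed.

Lemma parts_prod d (S : {set 'I_d}) (p : 'I_d -> 'I_d) (f : nat -> nat) :
  (forall x, p x \in S) -> (forall x, x \in S -> p x = x) ->
  (forall x, ~~ (x \in S) -> p (ordS x) = p x) ->
  (forall x, connect (cyc_adj S) x (p x)) ->
  \prod_(P in cyc_parts S) f #|P| = \prod_(x in S) f #|[set y | p y == x]|.
Proof.
move=> pS pid pstep pcon.
have adj : forall x y, cyc_adj S x y -> p x = p y.
  move=> x y; rewrite /cyc_adj => /orP [/andP [hx /eqP ->]|/andP [hy /eqP ->]].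
    by rewrite pstep.
  by rewrite pstep.
have hcon : forall x y, connect (cyc_adj S) x y = (p x == p y).
  move=> x y; apply/idP/eqP.
    intros H; case/connectP: H => q hq ->{y}.
    elim: q x hq => [|z q IH] x //=.
    by case/andP=> hxz hq; rewrite (adj _ _ hxz) (IH _ hq).
  move=> hxy; apply: connect_trans (pcon x) _.
  rewrite hxy (sym_connect_sym (@cyc_adj_sym d S)); exact: pcon.
have -> : cyc_parts S = [set [set y | p y == x] | x in S].
  apply/setP => P; apply/imsetP/imsetP => [[x _ ->]|[x xS ->]].
    exists (p x) => //; apply/setP => y; rewrite !inE hcon eq_sym.
    by [].
  exists x; first by [].
  by apply/setP => y; rewrite !inE hcon (pid _ xS) eq_sym.
rewrite (big_imset (fun P : {set 'I_d} => f #|P|)) //= => x1 x2 h1 h2 /setP /(_ x1).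
by rewrite !inE (pid _ h1) eqxx => /esym /eqP.
Qed.

Definition lp (s : seq bool) y := y + find id (drop y s).
Definition pn (s : seq bool) y := if lp s y < size s then lp s y else find id s.
Definition mu (s : seq bool) y :=
  if lp s y < size s then lp s y - y else size s - y + find id s.
Definition nxt n y := if y.+1 < n then y.+1 else 0.

Lemma lp_ge s y : y <= lp s y. Proof. exact: leq_addr. Qed.

Lemma lp_true s y : y < size s -> nth false s y -> lp s y = y.
Proof. by move=> h hy; rewrite /lp (drop_nth false h) /= hy addn0. Qed.

Lemma lp_false s y : y < size s -> ~~ nth false s y -> lp s y = lp s y.+1.
Proof.
by move=> h hy; rewrite /lp (drop_nth false h) /= (negbTE hy) addSnnS.
Qed.

Lemma lp_lt s y : lp s y < size s -> nth false s (lp s y).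
Proof.
rewrite /lp => h.
have hh : has id (drop y s).
  rewrite has_find size_drop; lia.
by have := nth_find false hh; rewrite nth_drop.
Qed.

Lemma find_lt s : has id s -> find id s < size s.
Proof. by rewrite has_find. Qed.

Lemma lp0 s : lp s 0 = find id s.
Proof. by rewrite /lp drop0. Qed.

Lemma pn_lt s y : has id s -> pn s y < size s.
Proof. by move=> hs; rewrite /pn; case: ifP => // _; exact: find_lt. Qed.

Lemma pn_nth s y : has id s -> nth false s (pn s y).
Proof.
move=> hs; rewrite /pn; case: ifP => h; first exact: lp_lt.
by have := nth_find false hs.
Qed.

Lemma pn_true s y : y < size s -> nth false s y -> pn s y = y.
Proof. by move=> h hy; rewrite /pn lp_true ?h. Qed.

Lemma lp_last s y : y.+1 = size s -> ~~ nth false s y -> lp s y = size s.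
Proof.
move=> h hy; have hy' : y < size s by rewrite -h.
by rewrite (lp_false hy' hy) /lp drop_oversize ?h //= addn0.
Qed.

Lemma pn_step s y : has id s -> y < size s -> ~~ nth false s y ->
  pn s (nxt (size s) y) = pn s y.
Proof.
move=> hs h hy; rewrite /nxt; case: ifP => h1.
  by rewrite /pn -lp_false.
have e : y.+1 = size s by lia.
by rewrite /pn (lp_last e hy) ltnn lp0 (find_lt hs).
Qed.

Lemma mu_step s y : has id s -> y < size s -> ~~ nth false s y ->
  mu s (nxt (size s) y) < mu s y.
Proof.
move=> hs h hy; have hf := find_lt hs.
rewrite /nxt; case: ifP => h1.
  have e := lp_false h hy; have g := lp_ge s y.+1.
  rewrite /mu -e; case: ifP => h2; lia.
have e : y.+1 = size s by lia.
rewrite /mu (lp_last e hy) ltnn lp0 hf. lia.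
Qed.

Definition lcnt (s : seq bool) x := \sum_(y < size s) (lp s y == x).
Definition tr (s : seq bool) := \sum_(y < size s) (size s <= lp s y).

Fixpoint G (k : nat) (s : seq bool) : nat :=
  match s with
  | [::] => 1
  | true :: r => alpha k.+1 * G 0 r
  | false :: r => G k.+1 r
  end.

Fixpoint Hh (c k : nat) (r : seq bool) : nat :=
  match r with
  | [::] => alpha (c + k)
  | true :: r => alpha k.+1 * Hh c 0 r
  | false :: r => Hh c k.+1 r
  end.

Fixpoint H0 (m : nat) (s : seq bool) : nat :=
  match s with
  | [::] => 0
  | true :: r => Hh m.+1 0 r
  | false :: r => H0 m.+1 r
  end.

Lemma lp_consS b r y : lp (b :: r) y.+1 = (lp r y).+1.
Proof. by rewrite /lp. Qed.

Lemma lp_cons0 b r : lp (b :: r) 0 = if b then 0 else (find id r).+1.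
Proof. by rewrite /lp /=; case: b. Qed.

Lemma cnt_split s (x : nat) : x < size s ->
  \sum_(y < size s) (pn s y == x) = lcnt s x + (x == find id s) * tr s.
Proof.
move=> hx; rewrite /lcnt /tr big_distrr -big_split /=; apply: eq_bigr => y _.
rewrite /pn; case: ifP => h.
  have -> : (size s <= lp s y) = false by rewrite leqNgt h.
  by rewrite muln0 addn0.
have -> : (lp s y == x) = false.
  by apply/negbTE; apply/eqP => e; move: h; rewrite e hx.
rewrite leqNgt h /= muln1 add0n; congr nat_of_bool; exact: eq_sym.
Qed.

Lemma lcnt_cons b r x :
  lcnt (b :: r) x.+1 = (lp (b :: r) 0 == x.+1) + lcnt r x.
Proof.
by rewrite /lcnt /= big_ord_recl; congr (_ + _); apply: eq_bigr => y _; rewrite lp_consS.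
Qed.

Lemma lcnt_true0 r : lcnt (true :: r) 0 = 1.
Proof.
rewrite /lcnt /= big_ord_recl lp_cons0 /= big1 // => y _.
Qed.

Lemma tr_cons b r : tr (b :: r) = (size r < lp (b :: r) 0) + tr r.
Proof.
by rewrite /tr /= big_ord_recl; congr (_ + _); apply: eq_bigr => y _; rewrite lp_consS.
Qed.

Lemma tr_true r : tr (true :: r) = tr r.
Proof. by rewrite tr_cons lp_cons0. Qed.

Lemma tr_false r : tr (false :: r) = ~~ has id r + tr r.
Proof. by rewrite tr_cons lp_cons0 ltnS has_find -leqNgt. Qed.

Lemma prod_cons (F : nat -> nat) (b : bool) (r : seq bool) :
  \prod_(x < size (b :: r) | nth false (b :: r) x) F x =
  (if b then F 0 else 1) * \prod_(x < size r | nth false r x) F x.+1.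
Proof.
rewrite /= big_mkcond big_ord_recl /=; congr (_ * _).
by rewrite [RHS]big_mkcond.
Qed.

Lemma Gprod s k :
  \prod_(x < size s | nth false s x) alpha (lcnt s x + (nat_of_ord x == find id s) * k) = G k s.
Proof.
elim: s k => [|b r IH] k; first by rewrite big_ord0.
rewrite (prod_cons (fun n => alpha (lcnt (b :: r) n + (n == find id (b :: r)) * k))); case: b => /=.
  rewrite lcnt_true0 -(IH 0) mul1n add1n; congr (_ * _); apply: eq_bigr => x _.
  by rewrite lcnt_cons lp_cons0 /= !muln0.
rewrite mul1n -IH; apply: eq_bigr => x _.
rewrite lcnt_cons lp_cons0 /= eqSS; congr alpha.
rewrite eqSS (eq_sym (find id r)); case: eqP => _; lia.
Qed.

Lemma Hh_eq c k r :
  Hh c k r = alpha (c + tr r + k * ~~ has id r) * G k r.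
Proof.
elim: r c k => [|b r IH] c k /=.
  by rewrite /tr big_ord0 addn0 muln1 muln1.
case: b => /=.
  by rewrite IH tr_true muln0 !addn0 mulnCA.
rewrite IH tr_false; congr (alpha _ * _).
case: (has id r) => /=; lia.
Qed.

Lemma H0_eq m s : H0 m s = has id s * G (m + tr s) s.
Proof.
elim: s m => [|b r IH] m //=.
case: b => /=.
  rewrite Hh_eq tr_true mul1n.
  case: (has id r); rewrite /= ?muln0 ?muln1 ?addn0; [|]; rewrite mulnC; congr (_ * _); congr alpha; lia.
rewrite IH tr_false; case: (has id r) => //=.
Qed.

Lemma prod_H0 s : has id s ->
  \prod_(x < size s | nth false s x) alpha (\sum_(y < size s) (pn s y == x)) = H0 0 s.
Proof.
move=> hs; rewrite H0_eq hs mul1n add0n -Gprod; apply: eq_bigr => x _.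
by rewrite cnt_split.
Qed.

Definition bits d (S : {set 'I_d}) : seq bool := [seq i \in S | i <- enum 'I_d].

Lemma size_bits d (S : {set 'I_d}) : size (bits S) = d.
Proof. by rewrite size_map size_enum_ord. Qed.

Lemma nth_bits d (S : {set 'I_d}) (x : 'I_d) : nth false (bits S) x = (x \in S).
Proof.
rewrite (nth_map x) ?size_enum_ord //; congr (_ \in S); apply: val_inj.
by rewrite /= nth_enum_ord.
Qed.

Lemma has_bits d (S : {set 'I_d}) : has id (bits S) = (S != set0).
Proof.
rewrite has_map; apply/hasP/set0Pn => [[x _ /= hx]|[x hx]]; first by exists x.
by exists x; rewrite ?mem_enum.
Qed.

Definition pS d (S : {set 'I_d}) (x : 'I_d) : 'I_d := insubd x (pn (bits S) x).

Section P.
Variables (d : nat) (S : {set 'I_d}).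
Hypothesis hS : S != set0.

Lemma hasS : has id (bits S). Proof. by rewrite has_bits. Qed.

Lemma val_pS x : val (pS S x) = pn (bits S) x.
Proof.
have h := @pn_lt (bits S) x hasS; rewrite size_bits in h.
by rewrite /pS val_insubd h.
Qed.

Lemma pS_in x : pS S x \in S.
Proof. by rewrite -nth_bits val_pS pn_nth // hasS. Qed.

Lemma pS_id x : x \in S -> pS S x = x.
Proof.
move=> hx; apply: val_inj; rewrite val_pS pn_true //; first by rewrite size_bits.
by rewrite nth_bits.
Qed.

Lemma ordS_nxt (x : 'I_d) : val (ordS x) = nxt d x.
Proof.
rewrite /= /nxt; case: ifP => h; first by rewrite modn_small.
have -> : x.+1 = d by have := ltn_ord x; lia.
by rewrite modnn.
Qed.

Lemma pS_step x : x \notin S -> pS S (ordS x) = pS S x.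
Proof.
move=> hx; apply: val_inj; rewrite !val_pS ordS_nxt.
have := @pn_step (bits S) x hasS; rewrite size_bits => h; apply: h => //.
by rewrite nth_bits.
Qed.

Lemma pS_con x : connect (cyc_adj S) x (pS S x).
Proof.
move: {2}(mu (bits S) x) (leqnn (mu (bits S) x)) => m.
elim: m x => [|m IH] x hm.
  case hx: (x \in S); first by rewrite pS_id.
  have := mu_step (s := bits S) (y := x) hasS; rewrite size_bits nth_bits hx => /(_ (ltn_ord x) isT).
  lia.
case hx: (x \in S); first by rewrite pS_id.
apply: connect_trans (_ : connect _ x (ordS x)) _.
  by apply: connect1; rewrite /cyc_adj hx eqxx.
rewrite -(pS_step (negbT hx)); apply: IH.
have := mu_step (s := bits S) (y := x) hasS; rewrite size_bits nth_bits hx => /(_ (ltn_ord x) isT).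
rewrite -ordS_nxt => h; rewrite -ltnS; exact: leq_trans h hm.
Qed.

Lemma F_bits (f : nat -> nat) :
  \prod_(P in cyc_parts S) f #|P| =
  \prod_(x < d | nth false (bits S) x) f (\sum_(y < d) (pn (bits S) y == x)).
Proof.
rewrite (parts_prod (p := pS S)) //; last (exact: pS_con); last (exact: pS_step);
  last (exact: pS_id); last (exact: pS_in).
apply: eq_big => x; first by rewrite nth_bits.
move=> _; congr f; rewrite -sum1_card big_mkcond /=; apply: eq_bigr => y _.
by rewrite inE -val_eqE val_pS; case: (_ == _).
Qed.

End P.

Lemma F_H0 d (S : {set 'I_d}) : S != set0 ->
  \prod_(P in cyc_parts S) alpha #|P| = H0 0 (bits S).
Proof.
move=> hS; rewrite F_bits // -prod_H0 ?has_bits //.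
move: (bits S) (size_bits S) => s <-.
by [].
Qed.

Fixpoint allbits (n : nat) : seq (seq bool) :=
  match n with
  | 0 => [:: [::]]
  | n.+1 => [seq true :: t | t <- allbits n] ++ [seq false :: t | t <- allbits n]
  end.

Lemma cons_inj (b : bool) : injective (cons b).
Proof. by move=> x y []. Qed.

Lemma mem_allbits n s : (s \in allbits n) = (size s == n).
Proof.
elim: n s => [|n IH] s; first by case: s.
case: s => [|b t]; first by rewrite mem_cat; apply/negP => /orP [] /mapP [u _].
rewrite /= mem_cat; case: b; rewrite (mem_map (@cons_inj _)) IH eqSS.
  case: (size t == n) => //=; apply/negP => /mapP [u _ []] //.
case: (size t == n); rewrite ?orbT //= orbF; apply/negP => /mapP [u _ []] //.
Qed.

Lemma uniq_allbits n : uniq (allbits n).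
Proof.
elim: n => [|n IH] //=; rewrite cat_uniq !(map_inj_uniq (@cons_inj _)) IH /= andbT.
by apply/hasP => [[s /mapP [u _ ->] /mapP [v _ []]]].
Qed.

Lemma bits_inj d : injective (@bits d).
Proof. by move=> S1 S2 h; apply/setP => x; rewrite -!nth_bits h. Qed.

Lemma sum_sets d (F : seq bool -> nat) :
  \sum_(S : {set 'I_d}) F (bits S) = \sum_(s <- allbits d) F s.
Proof.
rewrite -(big_map (@bits d) xpredT F) /=; apply: perm_big.
apply: uniq_perm.
- by rewrite (map_inj_uniq (@bits_inj d)) index_enum_uniq.
- exact: uniq_allbits.
move=> s; rewrite mem_allbits; apply/mapP/eqP => [[S _ ->]|hs].
  exact: size_bits.
exists [set x : 'I_d | nth false s x]; first by rewrite mem_index_enum.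
apply: (@eq_from_nth _ false); first by rewrite size_bits.
move=> i; rewrite hs => hi.
have -> : i = Ordinal hi by [].
by rewrite nth_bits inE.
Qed.

From mathcomp Require Import all_algebra ring.

Section Alg.
Import GRing.Theory Num.Theory.

Lemma binC2 m : m.+1 * 'C(m.*2.+2, m.+1) = (4 * m + 2) * 'C(m.*2, m).
Proof.
have h1 : 'C(m.*2.+2, m.+1) = 2 * 'C(m.*2.+1, m.+1).
  rewrite binS -[in 'C(m.*2.+1, m)](bin_sub (n:=m.*2.+1) (m:=m)); last by lia.
  have -> : m.*2.+1 - m = m.+1 by lia. lia.
have h2 := mul_bin_diag m.*2.+1 m. rewrite /= in h2.
rewrite h1 mulnCA -h2. lia.
Qed.

Lemma catE m : catalan m * m.+1 = 'C(2 * m, m).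
Proof.
rewrite /catalan divnK // mul2n.
have h := mul_bin_left m.*2 m.
rewrite (_ : m.*2 - m = m) in h; last by lia.
have hle : 'C(m.*2, m.+1) <= 'C(m.*2, m).
  have : m.+1 * 'C(m.*2, m.+1) <= m.+1 * 'C(m.*2, m) by rewrite h leq_mul2r leqnSn orbT.
  by rewrite leq_mul2l.
have -> : 'C(m.*2, m) = m.+1 * ('C(m.*2, m) - 'C(m.*2, m.+1)).
  rewrite mulnBr h. lia.
exact: dvdn_mulr.
Qed.

Lemma catS m : m.+2 * catalan m.+1 = (4 * m + 2) * catalan m.
Proof.
apply/eqP; rewrite -(eqn_pmul2l (ltn0Sn m)); apply/eqP.
rewrite mulnCA [m.+2 * _]mulnC -mulnA catE.
rewrite (mulnCA m.+1 (4 * m + 2)) (mulnC m.+1 (catalan m)) catE !mul2n doubleS binC2.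
by [].
Qed.



Local Open Scope ring_scope.
Definition eqt (N : nat) (p q : {poly int}) := forall i, (i < N)%N -> p`_i = q`_i.

Lemma eqt_refl N p : eqt N p p. Proof. by []. Qed.
Lemma eqt_sym N p q : eqt N p q -> eqt N q p. Proof. by move=> h i /h. Qed.
Lemma eqt_trans N p q r : eqt N p q -> eqt N q r -> eqt N p r.
Proof. by move=> h1 h2 i hi; rewrite h1 // h2. Qed.
Lemma eqt_le M N p q : (M <= N)%N -> eqt N p q -> eqt M p q.
Proof. by move=> hMN h i hi; apply: h; apply: leq_trans hMN. Qed.
Lemma eqt_add N p q p' q' : eqt N p p' -> eqt N q q' -> eqt N (p + q) (p' + q').
Proof. by move=> h1 h2 i hi; rewrite !coefD h1 // h2. Qed.
Lemma eqt_opp N p p' : eqt N p p' -> eqt N (- p) (- p').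
Proof. by move=> h1 i hi; rewrite !coefN h1. Qed.
Lemma eqt_mul N p q p' q' : eqt N p p' -> eqt N q q' -> eqt N (p * q) (p' * q').
Proof.
move=> h1 h2 i hi; rewrite !coefM; apply: eq_bigr => j _.
rewrite h1; last by apply: leq_ltn_trans hi; rewrite -ltnS.
rewrite h2 //; apply: leq_ltn_trans hi; exact: leq_subr.
Qed.
Lemma eqt_deriv N p q : eqt N.+1 p q -> eqt N p^`() q^`().
Proof. by move=> h i hi; rewrite !coef_deriv h. Qed.

Lemma eqt_by N P Q E : P = Q + E -> eqt N E 0 -> eqt N P Q.
Proof. move=> -> h; rewrite -[X in eqt _ _ X]addr0; apply: eqt_add => //. Qed.
Lemma z_add N e f : eqt N e 0 -> eqt N f 0 -> eqt N (e + f) 0.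
Proof. by move=> h1 h2; rewrite -[0]addr0; apply: eqt_add. Qed.
Lemma z_mul N c e : eqt N e 0 -> eqt N (c * e) 0.
Proof. by move=> h; rewrite -(mulr0 c); apply: eqt_mul. Qed.
Lemma z_mulr N c e : eqt N e 0 -> eqt N (e * c) 0.
Proof. by move=> h; rewrite mulrC; apply: z_mul. Qed.
Lemma z_sub N e f : eqt N e 0 -> eqt N f 0 -> eqt N (e - f) 0.
Proof. by move=> h1 h2; apply: z_add => //; rewrite -oppr0; apply: eqt_opp. Qed.
Lemma z_of N p q : eqt N p q -> eqt N (p - q) 0.
Proof. by move=> h i hi; rewrite coefB h // subrr coef0. Qed.

Lemma cX0 (p : {poly int}) : ('X * p)`_0 = 0.
Proof. by rewrite coefXM. Qed.
Lemma cXS (p : {poly int}) i : ('X * p)`_i.+1 = p`_i.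
Proof. by rewrite coefXM. Qed.

Definition cp N : {poly int} := \poly_(i < N) (catalan i)%:R.
Definition bp N : {poly int} := \poly_(i < N) ('C(2 * i, i))%:R.

Lemma natMn (a b : nat) : (a%:R *+ b = (a * b)%:R :> int).
Proof. by rewrite natrM mulr_natr. Qed.

Lemma ode_c N : eqt N.-1 ('X * (cp N)^`() - ('X * ('X * (cp N)^`())) *+ 4
   - ('X * cp N) *+ 2 + cp N - 1) 0.
Proof.
move=> i hi; rewrite coef0 !coefD !coefN !coefMn coef1.
have hN : (i < N)%N by move: hi; case: N => //= n; apply: ltnW.
case: i hi hN => [|j] hi hN.
  rewrite !coefXM /= coef_poly hN /= (_ : catalan 0 = 1%N) // !mul0rn; ring.
have hj : (j < N)%N by apply: ltnW.
rewrite !coefXM /= !coef_deriv !coef_poly hN hj /=.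
case: j hi hN hj => [|j] hi hN hj.
  rewrite /= (_ : catalan 0 = 1%N) // (_ : catalan 1 = 1%N) //; ring.
rewrite /= ltnW //.
have h := catS j.+1.
have hz := congr1 (fun n => n%:R : int) h.
rewrite /= in hz.
rewrite !natMn.
lia.
Qed.

Lemma ode_b N : eqt N.-1 ((bp N)^`() - ('X * (bp N)^`()) *+ 4 - (bp N) *+ 2) 0.
Proof.
move=> i hi; rewrite coef0 !coefB !coefMn.
have hN : (i.+1 < N)%N by move: hi; case: N.
have hi' : (i < N)%N by apply: ltnW.
rewrite coefXM !coef_deriv !coef_poly hN hi'.
case: i hi hN hi' => [|j] hi hN hi' /=.
  rewrite mul0rn subr0 (_ : 'C(2, 1) = 2%N) // (_ : 'C(0, 0) = 1%N) //; ring.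
rewrite hi' /= !natMn.
have h := binC2 j.+1.
have hz := congr1 (fun n => n%:R : int) h.
rewrite /= !doubleS in hz.
rewrite !mul2n !doubleS.
lia.
Qed.

Lemma uniqQ M (Q : {poly int}) : Q`_0 = 0 ->
  eqt M ('X * Q^`() - ('X * ('X * Q^`())) *+ 4 + Q) 0 -> eqt M Q 0.
Proof.
move=> h0 h; elim=> [|j IH] hj; first by rewrite h0 coef0.
have := h _ hj; rewrite coef0 !coefD !coefN !coefMn !coefXM /= coef_deriv.
case: j IH hj => [|j] IH hj.
  rewrite /= mul0rn subr0 mulr1n => /eqP; rewrite -mulr2n mulrn_eq0 /=.
  by move/eqP.
rewrite /= coef_deriv IH ?(ltnW hj) // coef0 mul0rn mul0rn subr0 -mulrSr.
move=> /eqP; rewrite mulrn_eq0 /=.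
by move/eqP.
Qed.

Lemma uniqE M (E : {poly int}) :
  eqt M (E^`() - ('X * E^`()) *+ 4) 0 -> forall i, (0 < i)%N -> (i <= M)%N -> E`_i = 0.
Proof.
move=> h; elim=> [|j IH] // _ hj.
have := h _ hj; rewrite coef0 coefB coefMn coefXM coef_deriv.
case: j IH hj => [|j] IH hj /=.
  by rewrite mul0rn subr0 => /eqP; rewrite mulrn_eq0 /= => /eqP.
rewrite coef_deriv IH // ?(ltnW hj) // mul0rn mul0rn subr0 => /eqP.
by rewrite mulrn_eq0 /= => /eqP.
Qed.

Lemma dE1 (c : {poly int}) :
  ('X * c^+2 - c + 1)^`() = c^+2 + ('X * c * c^`()) *+ 2 - c^`().
Proof. rewrite !expr2 !derivE; ring. Qed.

Lemma R1 N : (0 < N)%N -> eqt N.-1 ('X * (cp N)^+2 - cp N + 1) 0.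
Proof.
move=> hN; apply: uniqQ.
  by rewrite !coefD coefN coefXM coef1 coef_poly hN /= (_ : catalan 0 = 1%N) // subrr.
apply: (eqt_by (E := (('X * cp N) *+ 2 - 1) * ('X * (cp N)^`() - ('X * ('X * (cp N)^`())) *+ 4
   - ('X * cp N) *+ 2 + cp N - 1))); last by apply: z_mul; apply: ode_c.
rewrite dE1; ring.
Qed.

Lemma R3 N : (1 < N)%N ->
  eqt N.-2 ((cp N)^+2 + ('X * cp N * (cp N)^`()) *+ 2 - (cp N)^`()) 0.
Proof.
move=> hN; rewrite -dE1; apply: (@eqt_trans _ _ ((0 : {poly int})^`())); last by rewrite deriv0.
apply: eqt_deriv.
have -> : (N.-2).+1 = N.-1 by case: N hN => [|[|n]].
exact: (R1 (ltnW hN)).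
Qed.

Lemma R2 N : (1 < N)%N ->
  eqt N.-1 ((1 - ('X * cp N) *+ 2) * bp N) 1.
Proof.
move=> hN.
set c := cp N; set b := bp N.
set E := (1 - ('X * c) *+ 2) * b.
have hE : eqt N.-2 (E^`() - ('X * E^`()) *+ 4) 0.
  apply: (eqt_by (E := (1 - ('X * c) *+ 2) * (b^`() - ('X * b^`()) *+ 4 - b *+ 2)
     + b * ((2%:R + ('X * c) *+ 4 + ('X * ('X * c^`())) *+ 8) * ('X * c^+2 - c + 1)
            + ('X * (1 - ('X * c) *+ 2)) *+ 2 * (c^+2 + ('X * c * c^`()) *+ 2 - c^`())))).
    rewrite /E !derivE; ring.
  apply: z_add; apply: z_mul.
    have h := @ode_b N. 
    move=> i hi; apply: (h i); move: hi; case: (N) hN => [|[|n]] //= _ hi; exact: ltnW.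
  apply: z_add; apply: z_mul.
    have h := R1 (ltnW hN).
    move=> i hi; apply: (h i); move: hi; case: (N) hN => [|[|n]] //= _ hi; exact: ltnW.
  exact: R3.
move=> i hi; case: i hi => [|i] hi.
  rewrite coef1 /E coefM big_ord1 coefB coef1 coefMn coefXM /= mul0rn subr0 mul1r.
  by rewrite /b coef_poly (ltnW hN) /= (_ : 'C(0, 0) = 1%N).
rewrite coef1 /=; apply: (uniqE hE) => //.
by move: hi; case: (N) => [|[|n]].
Qed.

Lemma Rfin N : (1 < N)%N ->
  eqt N.-2 ('X * (1 + cp N + 'X * (cp N)^`()) * (cp N)^+2) (bp N - 1).
Proof.
move=> hN.
set c := cp N; set b := bp N.
set s := 1 - ('X * c) *+ 2.
set W := 'X * (1 + c + 'X * c^`()) * c^+2.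
set e1 := 'X * c^+2 - c + 1.
set e2 := c^+2 + ('X * c * c^`()) *+ 2 - c^`().
apply: (eqt_by (E := - (W + 1) * (s * b - 1) + b * (e1 * ((1 + c) * s - 2%:R + e1)
   - ('X * ('X * c^+2)) * e2))).
  rewrite /W /s /e1 /e2; ring.
apply: z_add.
  rewrite mulNr; apply: (@eqt_trans _ _ (- 0)); last by rewrite oppr0.
  apply: eqt_opp; apply: z_mul; apply: z_of.
  apply: (eqt_le _ (R2 hN)); exact: leq_pred.
apply: z_mul; apply: z_sub; first apply: z_mulr.
  move=> i hi; have hi' : (i < N.-1)%N by move: hi; case: (N) => [|[|n]] //= hi; exact: ltnW.
  exact: (R1 (ltnW hN) hi').
apply: z_mul; exact: R3.
Qed.

Lemma RL N : (0 < N)%N ->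
  eqt N.-1 ((cp N)^+2) (1 + 'X * (1 + cp N) * (cp N)^+2).
Proof.
move=> hN.
apply: (eqt_by (E := - ((1 + cp N) * ('X * (cp N)^+2 - cp N + 1)))); first ring.
rewrite -mulNr; apply: z_mul; exact: R1.
Qed.

Definition Lc (m : nat) : nat := (\sum_(i < m.+1) catalan i * catalan (m - i))%N.

Lemma cpE N i : (i < N)%N -> (cp N)`_i = (catalan i)%:R.
Proof. by move=> h; rewrite coef_poly h. Qed.

Lemma sqE N m : (m < N)%N -> ((cp N)^+2)`_m = (Lc m)%:R.
Proof.
move=> h; rewrite expr2 coefM /Lc natr_sum; apply: eq_bigr => i _.
rewrite natrM !cpE //; first by apply: leq_ltn_trans h; exact: leq_subr.
by apply: leq_ltn_trans h; rewrite -ltnS.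
Qed.

Lemma aE N j : (j < N)%N -> (1 + cp N)`_j = (alpha j.+1)%:R.
Proof.
move=> h; rewrite coefD coef1 cpE // /alpha /= natrD addrC.
by rewrite eqSS.
Qed.

Lemma DE N j : (j.+1 < N)%N ->
  (1 + cp N + 'X * (cp N)^`())`_j = (j.+1 * alpha j.+1)%:R.
Proof.
move=> h; rewrite coefD aE ?(ltnW h) // coefXM.
case: j h => [|j] h /=; first by rewrite addr0 mul1n.
rewrite coef_deriv cpE; last exact: ltnW.
rewrite natMn -natrD; congr (_%:R).
rewrite /alpha /= addn0. lia.
Qed.

Lemma Lc0 : Lc 0 = 1%N.
Proof. by rewrite /Lc big_ord1. Qed.

Lemma LcS m : Lc m.+1 = (\sum_(j < m.+1) alpha j.+1 * Lc (m - j))%N.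
Proof.
have := @RL (m.+3) isT m.+1 (ltnSn _).
rewrite sqE // coefD coef1 add0r -mulrA coefXM /= coefM.
move/eqP.
have -> : \sum_(j < m.+1) (1 + cp m.+3)`_j * ((cp m.+3)^+2)`_(m - j)
   = \sum_(j < m.+1) ((alpha j.+1 * Lc (m - j))%N)%:R.
  apply: eq_bigr => j _; have hj := ltn_ord j; rewrite aE; last by lia.
  rewrite sqE ?natrM //; lia.
by rewrite -natr_sum eqr_nat => /eqP.
Qed.

Lemma Tfin d : (0 < d)%N ->
  'C(2 * d, d) = (\sum_(j < d) j.+1 * alpha j.+1 * Lc (d.-1 - j))%N.
Proof.
case: d => // d _.
have := @Rfin (d.+4) isT d.+1 (ltnSn _).
rewrite -mulrA coefXM /= coefM coefB coef1 subr0 coef_poly ltnW //.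
move/eqP; rewrite eq_sym.
have -> : \sum_(j < d.+1) (1 + cp d.+4 + 'X * (cp d.+4)^`())`_j * ((cp d.+4)^+2)`_(d - j)
   = \sum_(j < d.+1) ((j.+1 * alpha j.+1 * Lc (d - j))%N)%:R.
  apply: eq_bigr => j _; have hj := ltn_ord j; rewrite DE; last by lia.
  rewrite sqE ?natrM //; lia.
by rewrite -natr_sum eqr_nat => /eqP.
Qed.

End Alg.

Definition Y c k n := \sum_(r <- allbits n) Hh c k r.
Definition Z m n := \sum_(s <- allbits n) H0 m s.

Lemma sum_allbitsS (F : seq bool -> nat) n :
  \sum_(s <- allbits n.+1) F s =
  \sum_(t <- allbits n) F (true :: t) + \sum_(t <- allbits n) F (false :: t).
Proof. by rewrite /= big_cat !big_map. Qed.

Lemma Y0 c k : Y c k 0 = alpha (c + k).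
Proof. by rewrite /Y /= big_seq1. Qed.

Lemma YS c k n : Y c k n.+1 = alpha k.+1 * Y c 0 n + Y c k.+1 n.
Proof. by rewrite /Y sum_allbitsS /= big_distrr. Qed.

Lemma Z0 m : Z m 0 = 0.
Proof. by rewrite /Z /= big_seq1. Qed.

Lemma ZS m n : Z m n.+1 = Y m.+1 0 n + Z m.+1 n.
Proof. by rewrite /Z sum_allbitsS. Qed.

Lemma Yc c n : forall k,
  Y c k n = alpha (c + k + n) + \sum_(j < n) alpha (k + j).+1 * Y c 0 (n.-1 - j).
Proof.
elim: n => [|n IH] k; first by rewrite Y0 big_ord0 !addn0.
rewrite YS (IH k.+1) big_ord_recl addn0 (_ : c + k.+1 + n = c + k + n.+1); last by lia.
rewrite addnCA; congr (_ + (_ + _)); first by rewrite subn0.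
apply: eq_bigr => j _; rewrite /bump /=.
congr (alpha _ * Y c 0 _); rewrite /bump leq0n add1n; lia.
Qed.

Lemma tri_step (f : nat -> nat -> nat) n :
  \sum_(j < n.+1) \sum_(i < n.+1 - j) f j i =
  \sum_(j < n) \sum_(i < n - j) f j i + \sum_(j < n.+1) f j (n - j).
Proof.
rewrite big_ord_recr /= subSnn big_ord1 [X in _ = _ + X]big_ord_recr /= subnn.
rewrite addnA; congr (_ + _).
rewrite -big_split /=; apply: eq_bigr => j _.
have -> : n.+1 - j = (n - j).+1 by have := ltn_ord j; lia.
by rewrite big_ord_recr.
Qed.

Lemma tri_swap (f : nat -> nat -> nat) n :
  \sum_(j < n) \sum_(i < n - j) f j i = \sum_(i < n) \sum_(j < n - i) f j i.
Proof.
elim: n => [|n IH]; first by rewrite !big_ord0.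
rewrite tri_step (tri_step (fun i j => f j i)) IH; congr (_ + _).
rewrite (reindex_inj rev_ord_inj) /=.
apply: eq_bigr => i _; congr f; have := ltn_ord i; lia.
Qed.

Lemma tri_diag (f : nat -> nat -> nat) n :
  \sum_(j < n) \sum_(i < n - j) f j i = \sum_(k < n) \sum_(j < k.+1) f j (k - j).
Proof.
elim: n => [|n IH]; first by rewrite !big_ord0.
by rewrite tri_step IH [RHS]big_ord_recr.
Qed.

Lemma Vc c n : Y c 0 n = \sum_(i < n.+1) alpha (c + i) * Lc (n - i).
Proof.
elim/ltn_ind: n => n IH.
rewrite Yc addn0 big_ord_recr /= subnn Lc0 muln1 addnC; congr (_ + _).
transitivity (\sum_(j < n) \sum_(i < n - j) alpha j.+1 * (alpha (c + i) * Lc (n.-1 - j - i))).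
  apply: eq_bigr => j _; have hj := ltn_ord j.
  rewrite IH; last by lia.
  have -> : (n.-1 - j).+1 = n - j by lia.
  rewrite big_distrr /=; apply: eq_bigr => i _; by [].
rewrite (tri_swap (fun j i => alpha j.+1 * (alpha (c + i) * Lc (n.-1 - j - i)))); apply: eq_bigr => i _; have hi := ltn_ord i.
have -> : n - i = (n - i).-1.+1 by lia.
rewrite LcS big_distrr /=; apply: eq_bigr => j _.
rewrite mulnCA; congr (_ * (_ * Lc _)); lia.
Qed.

Lemma Zc n : forall m, Z m n = \sum_(j < n) Y (m + j).+1 0 (n.-1 - j).
Proof.
elim: n => [|n IH] m; first by rewrite Z0 big_ord0.
rewrite ZS IH big_ord_recl addn0 subn0 /=; congr (_ + _).
apply: eq_bigr => j _; congr Y; rewrite /bump leq0n add1n; lia.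
Qed.

Lemma Zfin d : Z 0 d = \sum_(k < d) k.+1 * alpha k.+1 * Lc (d.-1 - k).
Proof.
rewrite Zc.
transitivity (\sum_(j < d) \sum_(i < d - j) alpha (j.+1 + i) * Lc (d.-1 - j - i)).
  apply: eq_bigr => j _; have hj := ltn_ord j.
  rewrite Vc; have -> : (d.-1 - j).+1 = d - j by lia.
  by apply: eq_bigr => i _; rewrite add0n.
rewrite (tri_diag (fun j i => alpha (j.+1 + i) * Lc (d.-1 - j - i))); apply: eq_bigr => k _; have hk := ltn_ord k.
rewrite (eq_bigr (fun _ => alpha k.+1 * Lc (d.-1 - k))); last first.
  move=> j _; have hj := ltn_ord j; congr (alpha _ * Lc _); lia.
by rewrite sum_nat_const card_ord mulnA.
Qed.


Theorem lemma3p3 (d : nat) : 1 <= d ->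
  'C(2 * d, d) =
  \sum_(S : {set 'I_d} | S != set0) \prod_(P in cyc_parts S) alpha #|P|.
Proof.
move=> hd; rewrite (Tfin hd) -Zfin /Z -(sum_sets d (H0 0)) [RHS]big_mkcond /=.
apply: eq_bigr => S _; case: ifP => hS; first by rewrite F_H0.
by rewrite H0_eq has_bits hS.
Qed.
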